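(* Let $\mathcal N$ and $\mathcal M$ be quantum channels satisfying $s$-detailed balance with respect to $\rho_\beta$, with $\mathcal N$ having $\rho_\beta$ as unique fixed state and spectrum in $[0,1]$. Let $\{Y_i\}_i$, $\lambda_i$, $\alpha_{ij}$ and $\mathrm{SC}$ be as defined in the context. If the map $\widehat{\mathcal M}$ satisfies $s$-detailed balance with respect to $\rho_\beta$, then $\mathrm{SC}\le\mathrm{Cov}_{\rho_\beta}(\mathcal M)$.
   Context: $H$ is an $n$-qubit Hermitian operator, $\beta>0$, $\rho_\beta=e^{-\beta H}/\operatorname{tr}(e^{-\beta H})$. $\mathcal T^\dagger$ denotes the Hilbert–Schmidt adjoint of a linear map $\mathcal T$ (for a channel with Kraus operators $K_u$, $\mathcal T^\dagger(X)=\sum_uK_u^\dagger XK_u$). $\langle A,B\rangle_s=\operatorname{tr}(A^\dagger\rho_\beta^{1-s}B\rho_\beta^s)$; a linear map $\mathcal T$ satisfies $s$-detailed balance if $\langle A,\mathcal T^\dagger(B)\rangle_s=\langle\mathcal T^\dagger(A),B\rangle_s$ for all $A,B$. $\mathcal M$ has Kraus operators $\{O_u\}_u$ indexed by finitely many real outcomes $u$; $\mathbb E_{\rho_\beta}(\mathcal M)=\sum_uu\operatorname{tr}(O_u\rho_\beta O_u^\dagger)$, $\mathrm{Cov}_{\rho_\beta}(\mathcal M)=\sum_{x,y}(x-\mathbb E_{\rho_\beta}(\mathcal M))(y-\mathbb E_{\rho_\beta}(\mathcal M))\operatorname{tr}(O_yO_x\rho_\beta O_x^\dagger O_y^\dagger)$,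 $\widehat{\mathcal M}(X)=\sum_u(u-\mathbb E_{\rho_\beta}(\mathcal M))O_uXO_u^\dagger$. Let $\mathcal E=\mathcal M\circ\mathcal N\circ\mathcal M$ and $\widehat{\mathcal E}=\mathcal M\circ\mathcal N\circ\widehat{\mathcal M}$. Let $\{Y_i\}_i$ be a basis of the $2^n\times2^n$ matrices, orthonormal w.r.t. $\langle\cdot,\cdot\rangle_s$, consisting of eigenvectors $\mathcal E^\dagger(Y_i)=\lambda_iY_i$ with $1=\lambda_1>\lambda_2\ge\lambda_3\ge\dots\ge0$ and $Y_1=I$. Define $\alpha_{ij}=\langle Y_j,\widehat{\mathcal E}^\dagger(Y_i)\rangle_s$ and the spectral covariance weight $\mathrm{SC}=\sum_j|\alpha_{1j}\alpha_{j1}|$. *)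

(* Defs.v *)
From HB Require Import structures.
From mathcomp Require Import all_boot all_order all_algebra.
From mathcomp Require Import complex.
From mathcomp Require Import reals interval_inference topology normedtype sequences exp.
Set Implicit Arguments. Unset Strict Implicit. Unset Printing Implicit Defensive.
Import Order.TTheory GRing.Theory Num.Theory.
Local Open Scope ring_scope.

Definition q_adjmx (R : realType) (m k : nat) (A : 'M[R[i]]_(m, k)) : 'M[R[i]]_(k, m) :=
  (map_mx (fun z : R[i] => z^*) A)^T.

(* positive semidefinite (w.r.t. the order of C, which forces reality) *)
Definition q_is_psd (R : realType) (d : nat) (A : 'M[R[i]]_d) : Prop :=
  forall v : 'cV[R[i]]_d, 0 <= (q_adjmx v *m A *m v) 0 0.

Definition q_is_state (R : realType) (d : nat) (A : 'M[R[i]]_d) : Prop :=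
  q_is_psd A /\ \tr A = 1.

Definition q_is_unitary (R : realType) (d : nat) (U : 'M[R[i]]_d) : Prop :=
  q_adjmx U *m U = 1%:M.

Definition q_specfun (R : realType) (d : nat) (U : 'M[R[i]]_d) (ev : 'I_d -> R)
    (f : R -> R) : 'M[R[i]]_d :=
  U *m diag_mx (\row_j ((f (ev j))%:C)%C) *m q_adjmx U.

Definition q_gibbs_weight (R : realType) (d : nat) (beta : R) (ev : 'I_d -> R)
    (x : R) : R :=
  expR (- beta * x) / \sum_(k < d) expR (- beta * ev k).

(* rho_beta = e^{-beta H} / tr e^{-beta H}, with H = U diag(ev) U^dagger *)
Definition q_gibbs (R : realType) (d : nat) (beta : R) (U : 'M[R[i]]_d)
    (ev : 'I_d -> R) : 'M[R[i]]_d :=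
  q_specfun U ev (q_gibbs_weight beta ev).

Definition q_gibbs_pow (R : realType) (d : nat) (beta : R) (U : 'M[R[i]]_d)
    (ev : 'I_d -> R) (p : R) : 'M[R[i]]_d :=
  q_specfun U ev (fun x => powR (q_gibbs_weight beta ev x) p).

Definition q_s_inner (R : realType) (d : nat) (beta : R) (U : 'M[R[i]]_d)
    (ev : 'I_d -> R) (s : R) (A B : 'M[R[i]]_d) : R[i] :=
  \tr (q_adjmx A *m q_gibbs_pow beta U ev (1 - s) *m B *m q_gibbs_pow beta U ev s).

Definition q_kraus_map (R : realType) (d : nat) (I : finType) (K : I -> 'M[R[i]]_d)
    (X : 'M[R[i]]_d) : 'M[R[i]]_d :=
  \sum_(u : I) (K u *m X *m q_adjmx (K u)).

Definition q_kraus_adj (R : realType) (d : nat) (I : finType) (K : I -> 'M[R[i]]_d)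
    (X : 'M[R[i]]_d) : 'M[R[i]]_d :=
  \sum_(u : I) (q_adjmx (K u) *m X *m K u).

(* trace preserving (hence a quantum channel, being completely positive) *)
Definition q_is_channel (R : realType) (d : nat) (I : finType) (K : I -> 'M[R[i]]_d) : Prop :=
  \sum_(u : I) (q_adjmx (K u) *m K u) = 1%:M.

Definition q_s_detailed_balance (R : realType) (d : nat) (ip : 'M[R[i]]_d -> 'M[R[i]]_d -> R[i])
    (Tadj : 'M[R[i]]_d -> 'M[R[i]]_d) : Prop :=
  forall A B, ip A (Tadj B) = ip (Tadj A) B.

Definition q_meas_mean (R : realType) (d : nat) (J : finType) (O : J -> 'M[R[i]]_d)
    (out : J -> R) (rho : 'M[R[i]]_d) : R[i] :=
  \sum_(u : J) ((out u)%:C)%C * \tr (O u *m rho *m q_adjmx (O u)).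

Definition q_meas_cov (R : realType) (d : nat) (J : finType) (O : J -> 'M[R[i]]_d)
    (out : J -> R) (rho : 'M[R[i]]_d) : R[i] :=
  let m := q_meas_mean O out rho in
  \sum_(x : J) \sum_(y : J)
     (((out x)%:C)%C - m) * (((out y)%:C)%C - m) *
     \tr (O y *m O x *m rho *m q_adjmx (O x) *m q_adjmx (O y)).

Definition q_meas_hat (R : realType) (d : nat) (J : finType) (O : J -> 'M[R[i]]_d)
    (out : J -> R) (rho : 'M[R[i]]_d) (X : 'M[R[i]]_d) : 'M[R[i]]_d :=
  \sum_(u : J) ((((out u)%:C)%C - q_meas_mean O out rho) *: (O u *m X *m q_adjmx (O u))).

Definition q_meas_hat_adj (R : realType) (d : nat) (J : finType) (O : J -> 'M[R[i]]_d)
    (out : J -> R) (rho : 'M[R[i]]_d) (X : 'M[R[i]]_d) : 'M[R[i]]_d :=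
  \sum_(u : J) ((((out u)%:C)%C - q_meas_mean O out rho)^* *: (q_adjmx (O u) *m X *m O u)).

Lemma dim_sq_gt0 (n : nat) : (0 < 2 ^ n * 2 ^ n)%N.
Proof. by rewrite muln_gt0 expn_gt0. Qed.

(* the first index (i = 1 in the paper) of the 4^n basis elements *)
Definition idx1 (n : nat) : 'I_(2 ^ n * 2 ^ n) := Ordinal (dim_sq_gt0 n).

(* Main.v *)
Require Import Defs.
From HB Require Import structures.
From mathcomp Require Import all_boot all_order all_algebra.
From mathcomp Require Import complex.
From mathcomp Require Import reals interval_inference topology normedtype sequences exp.
From mathcomp Require Import sesquilinear spectral.
From mathcomp Require Import ring.
Import Order.TTheory GRing.Theory Num.Theory.
Local Open Scope ring_scope.
Set Implicit Arguments. Unset Strict Implicit. Unset Printing Implicit Defensive.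

Section Adj.
Variable C : numClosedFieldType.

Definition adj (p q : nat) (A : 'M[C]_(p, q)) : 'M[C]_(q, p) := (map_mx (fun z => z^*) A)^T.

Lemma adjE p q (A : 'M[C]_(p, q)) i j : adj A i j = (A j i)^*.
Proof. by rewrite !mxE. Qed.

Lemma adjK p q (A : 'M[C]_(p, q)) : adj (adj A) = A.
Proof. by apply/matrixP => i j; rewrite !mxE conjCK. Qed.

Lemma adjM p q r (A : 'M[C]_(p, q)) (B : 'M[C]_(q, r)) : adj (A *m B) = adj B *m adj A.
Proof.
apply/matrixP => i j; rewrite !mxE rmorph_sum; apply: eq_bigr => k _.
by rewrite !mxE rmorphM mulrC.
Qed.

Lemma adjD p q (A B : 'M[C]_(p, q)) : adj (A + B) = adj A + adj B.
Proof. by apply/matrixP => i j; rewrite !mxE rmorphD. Qed.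

Lemma adjN p q (A : 'M[C]_(p, q)) : adj (- A) = - adj A.
Proof. by apply/matrixP => i j; rewrite !mxE rmorphN. Qed.

Lemma adjZ p q a (A : 'M[C]_(p, q)) : adj (a *: A) = a^* *: adj A.
Proof. by apply/matrixP => i j; rewrite !mxE rmorphM. Qed.

Lemma adj1 p : adj (1%:M : 'M[C]_p) = 1%:M.
Proof. by apply/matrixP => i j; rewrite !mxE rmorph_nat eq_sym. Qed.

Lemma adj_diag p (d : 'rV[C]_p) : adj (diag_mx d) = diag_mx (map_mx (fun z => z^*) d).
Proof.
apply/matrixP => i j; rewrite !mxE eq_sym; case: eqP => [->|_] /=; rewrite ?mulr1n ?mulr0n ?rmorph0 //.
Qed.

Definition nrm p (x : 'cV[C]_p) := (adj x *m x) 0 0.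

Lemma nrmE p (x : 'cV[C]_p) : nrm x = \sum_j `|x j 0| ^+ 2.
Proof. by rewrite /nrm mxE; apply: eq_bigr => j _; rewrite !mxE normCK mulrC. Qed.

Lemma nrm_ge0 p (x : 'cV[C]_p) : 0 <= nrm x.
Proof. by rewrite nrmE; apply: sumr_ge0 => j _; rewrite exprn_ge0. Qed.

Lemma quad_diag p (l : 'rV[C]_p) (x : 'cV[C]_p) :
  (adj x *m diag_mx l *m x) 0 0 = \sum_j l 0 j * `|x j 0| ^+ 2.
Proof.
rewrite mul_mx_diag mxE; apply: eq_bigr => j _; rewrite !mxE normCK.
by ring.
Qed.

Lemma quad_diag_le p (l : 'rV[C]_p) (x : 'cV[C]_p) :
  (forall j, 0 <= l 0 j <= 1) -> 0 <= (adj x *m diag_mx l *m x) 0 0 <= nrm x.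
Proof.
move=> hl; rewrite quad_diag nrmE; apply/andP; split.
  by apply: sumr_ge0 => j _; have /andP[h0 _] := hl j; rewrite mulr_ge0 ?exprn_ge0.
apply: ler_sum => j _; have /andP[h0 h1] := hl j.
by rewrite ler_piMl ?exprn_ge0.
Qed.

Lemma contr p (S : 'M[C]_p) :
  (forall y, nrm (adj S *m y) <= nrm y) -> forall x, nrm (S *m x) <= nrm x.
Proof.
move=> hS x.
set M := adj S *m S.
have hM : adj M = M by rewrite /M adjM adjK.
have q_def : nrm (S *m x) = (adj x *m M *m x) 0 0 by rewrite /nrm adjM /M !mulmxA.
have h1 : nrm (M *m x) <= nrm (S *m x) by rewrite /M -mulmxA; exact: hS.
have h2 := nrm_ge0 (M *m x - x).
have e : nrm (M *m x - x) = nrm (M *m x) - (adj x *m M *m x) 0 0 - (adj x *m M *m x) 0 0 + nrm x.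
  rewrite /nrm adjD adjN adjM hM !mulmxDl !mulmxDr !mulmxN !mulNmx !mulmxA opprK !mxE.
  ring.
rewrite -subr_ge0; rewrite e -q_def in h2.
have -> : nrm x - nrm (S *m x) = (nrm (M *m x) - nrm (S *m x) - nrm (S *m x) + nrm x) + (nrm (S *m x) - nrm (M *m x)) by ring.
by rewrite addr_ge0 // subr_ge0.
Qed.

Lemma tstar_adj p q (M : 'M[C]_(p, q)) : (M ^t Num.conj)%sesqui = adj M.
Proof. by apply/matrixP => i j; rewrite !mxE. Qed.

Lemma core_mx p (c pm : 'M[C]_p) (l : 'rV[C]_p) :
  adj c = c -> adj pm = pm ->
  (forall mu (v : 'cV[C]_p), v != 0 -> pm *m v = mu *: v -> 0 <= mu <= 1) ->
  c *m pm *m c = diag_mx l -> (forall j, 0 <= l 0 j <= 1) ->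
  forall a, nrm (c *m pm *m a) <= nrm a.
Proof.
move=> hc hp heig hcpc hl a.
have pn : pm \is normalmx by rewrite qualifE tstar_adj hp.
have := orthomx_spectralP pn.
set V := spectralmx pm; set d := spectral_diag pm => pE.
have hVu : V \is unitarymx by exact: spectral_unitarymx.
have VV : V *m adj V = 1%:M by rewrite -tstar_adj; apply/unitarymxP.
have VV' : adj V *m V = 1%:M by apply: mulmx1C.
rewrite invmx_unitary // tstar_adj in pE.
have pV : pm *m adj V = adj V *m diag_mx d by rewrite pE -!mulmxA VV mulmx1.
have hd : forall k, 0 <= d 0 k <= 1.
  move=> k; apply: (heig _ (col k (adj V))).
    apply/eqP => h0; move/matrixP: VV => /(_ k k); rewrite !mxE eqxx /=.
    rewrite big1 => [/eqP|j _]; first by rewrite eq_sym oner_eq0.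
    have -> : adj V j k = col k (adj V) j 0 by rewrite !mxE.
    by rewrite h0 mxE mulr0.
  apply/matrixP => i j; rewrite !mxE.
  move/matrixP: pV => /(_ i k); rewrite mul_mx_diag !mxE mulrC => <-.
  by apply: eq_bigr => t _; rewrite !mxE.
set D := diag_mx (\row_k sqrtC (d 0 k)).
have hD : adj D = D.
  rewrite /D adj_diag; congr diag_mx; apply/matrixP => i j; rewrite !mxE.
  by rewrite conj_Creal // sqrtC_real //; case/andP: (hd j).
have DD : D *m D = diag_mx d.
  rewrite /D mulmx_diag; congr diag_mx; apply/matrixP => i j; rewrite !mxE -expr2 sqrtCK.
  by rewrite (ord1 i).
set S := c *m adj V *m D.
have SS : S *m adj S = diag_mx l.
  rewrite /S !adjM adjK hD hc -hcpc pE.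
  by rewrite !mulmxA -(mulmxA _ D D) DD.
have hS : forall y, nrm (adj S *m y) <= nrm y.
  move=> y; rewrite /nrm adjM adjK mulmxA -(mulmxA _ S) SS.
  by case/andP: (quad_diag_le y (fun j => hl j)).
have := contr hS (D *m V *m a).
have -> : S *m (D *m V *m a) = c *m pm *m a.
  by rewrite /S pE !mulmxA -(mulmxA _ D D) DD.
move/le_trans; apply.
have -> : nrm (D *m V *m a) = (adj (V *m a) *m diag_mx d *m (V *m a)) 0 0.
  by rewrite /nrm !adjM hD !mulmxA -(mulmxA _ D D) DD.
have -> : nrm a = nrm (V *m a) by rewrite /nrm adjM !mulmxA -(mulmxA _ (adj V)) VV' mulmx1.
by case/andP: (quad_diag_le (V *m a) hd).
Qed.

End Adj.

Section Abs.
Variables (C : numClosedFieldType) (V : lmodType C) (m : nat).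
Variables (ip : V -> V -> C) (Y : 'I_m -> V).
Hypothesis ipL : forall a X W Z, ip Z (a *: X + W) = a * ip Z X + ip Z W.
Hypothesis ipR : forall a X W Z, ip (a *: X + W) Z = a^* * ip X Z + ip W Z.
Hypothesis ortho : forall i j, ip (Y i) (Y j) = (i == j)%:R.
Hypothesis span : forall X, X = \sum_j ip (Y j) X *: Y j.

Lemma dbl0 (Z : zmodType) (x : Z) : x = x + x -> x = 0.
Proof. by move=> h; have := subrr x; rewrite {1}h addrK. Qed.

Definition lin (F : V -> V) := forall a X W, F (a *: X + W) = a *: F X + F W.
Definition sadj (F : V -> V) := forall X W, ip X (F W) = ip (F X) W.

Lemma ip0r Z : ip Z 0 = 0.
Proof.
by apply: dbl0; have := ipL 1 0 0 Z; rewrite scaler0 add0r mul1r.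
Qed.

Lemma ipDr Z X W : ip Z (X + W) = ip Z X + ip Z W.
Proof. by have := ipL 1 X W Z; rewrite scale1r mul1r. Qed.

Lemma ipZr Z a X : ip Z (a *: X) = a * ip Z X.
Proof. by rewrite -[a *: X]addr0 ipL ip0r addr0. Qed.

Lemma ip0l Z : ip 0 Z = 0.
Proof.
by apply: dbl0; have := ipR 1 0 0 Z; rewrite scaler0 add0r conjC1 mul1r.
Qed.

Lemma ipDl Z X W : ip (X + W) Z = ip X Z + ip W Z.
Proof. by have := ipR 1 X W Z; rewrite scale1r conjC1 mul1r. Qed.

Lemma ipZl Z a X : ip (a *: X) Z = a^* * ip X Z.
Proof. by rewrite -[a *: X]addr0 ipR ip0l addr0. Qed.

Lemma ip_sumr Z (c : 'I_m -> C) (W : 'I_m -> V) :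
  ip Z (\sum_j c j *: W j) = \sum_j c j * ip Z (W j).
Proof.
rewrite (big_morph (ip Z) (ipDr Z) (ip0r Z)); apply: eq_bigr => j _.
by rewrite ipZr.
Qed.

Lemma ip_suml Z (c : 'I_m -> C) (W : 'I_m -> V) :
  ip (\sum_j c j *: W j) Z = \sum_j (c j)^* * ip (W j) Z.
Proof.
rewrite (big_morph (ip^~ Z) (fun X W => ipDl Z X W) (ip0l Z)); apply: eq_bigr => j _.
by rewrite ipZl.
Qed.

Lemma ip_expand X W : ip X W = \sum_j (ip (Y j) X)^* * ip (Y j) W.
Proof. by rewrite {1}(span X) ip_suml. Qed.

Lemma ip_conj X W : (ip X W)^* = ip W X.
Proof.
rewrite !ip_expand rmorph_sum; apply: eq_bigr => j _.
by rewrite rmorphM /= conjCK mulrC.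
Qed.

Definition crd X : 'cV[C]_m := \col_j ip (Y j) X.
Definition mat (F : V -> V) : 'M[C]_m := \matrix_(j, k) ip (Y j) (F (Y k)).

Lemma ip_crd X W : ip X W = (adj (crd X) *m crd W) 0 0.
Proof. by rewrite ip_expand mxE; apply: eq_bigr => j _; rewrite !mxE. Qed.

Lemma lin_sum F (c : 'I_m -> C) (W : 'I_m -> V) : lin F ->
  F (\sum_j c j *: W j) = \sum_j c j *: F (W j).
Proof.
move=> hF.
have F0 : F 0 = 0.
  by apply: dbl0; have := hF 1 0 0; rewrite scaler0 add0r scale1r.
have FD : {morph F : x y / x + y} by move=> x y; have := hF 1 x y; rewrite !scale1r.
rewrite (big_morph F FD F0); apply: eq_bigr => j _.
by rewrite -[c j *: W j]addr0 hF F0 addr0.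
Qed.

Lemma crd_lin F X : lin F -> crd (F X) = mat F *m crd X.
Proof.
move=> hF; apply/matrixP => j i; rewrite (ord1 i) !mxE {1}(span X) lin_sum // ip_sumr.
by apply: eq_bigr => k _; rewrite !mxE mulrC.
Qed.

Lemma crdY k : crd (Y k) = delta_mx k 0.
Proof. by apply/matrixP => j i; rewrite (ord1 i) !mxE ortho eqxx andbT. Qed.

Lemma mat_sadj F : sadj F -> adj (mat F) = mat F.
Proof. by move=> hF; apply/matrixP => j k; rewrite !mxE ip_conj hF. Qed.

Lemma mat_comp F G : lin F -> mat (fun X => F (G X)) = mat F *m mat G.
Proof.
move=> hF; apply/matrixP => j k.
have := congr1 (fun v : 'cV_m => v j 0) (crd_lin (G (Y k)) hF).
rewrite !mxE => ->; apply: eq_bigr => t _; rewrite !mxE //.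
Qed.

Theorem abs_main (P Cm : V -> V) (lam : 'I_m -> C) (A : V) :
  lin P -> lin Cm -> sadj P -> sadj Cm ->
  (forall mu Z, Z != 0 -> P Z = mu *: Z -> 0 <= mu <= 1) ->
  (forall j, Cm (P (Cm (Y j))) = lam j *: Y j) -> (forall j, 0 <= lam j <= 1) ->
  \sum_j `|ip (Y j) A * ip A (P (Cm (Y j)))| <= ip A A.
Proof.
move=> lP lC sP sC eigP hlam hl.
set c := mat Cm; set pm := mat P.
have hc : adj c = c by exact: mat_sadj.
have hp : adj pm = pm by exact: mat_sadj.
have hcpc : c *m pm *m c = diag_mx (\row_j lam j).
  have lCP : lin (fun X => Cm (P X)) by move=> a X W; rewrite lP lC.
  rewrite /c /pm -(mat_comp P lC) -(mat_comp Cm lCP); apply/matrixP => j k.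
  by rewrite !mxE hlam ipZr ortho; case: eqP => [->|_]; rewrite ?mulr1 ?mulr0 ?mulr1n ?mulr0n.
have heig : forall mu (v : 'cV[C]_m), v != 0 -> pm *m v = mu *: v -> 0 <= mu <= 1.
  move=> mu v vn0 hv.
  set Z := \sum_k v k 0 *: Y k.
  have cZ : crd Z = v.
    apply/matrixP => j i; rewrite (ord1 i) mxE ip_sumr (bigD1 j) //= ortho eqxx mulr1 big1 ?addr0 //.
    by move=> k hk; rewrite ortho eq_sym (negbTE hk) mulr0.
  apply: (eigP mu Z).
    apply: contraNneq vn0 => hZ; rewrite -cZ hZ; by apply/eqP/matrixP => j i; rewrite !mxE ip0r.
  apply: (@eq_trans _ _ (\sum_j ip (Y j) (P Z) *: Y j)); first exact: span.
  rewrite /Z scaler_sumr; apply: eq_bigr => j _.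
  have := congr1 (fun w : 'cV_m => w j 0) (crd_lin Z lP); rewrite cZ hv mxE => ->.
  by rewrite !mxE scalerA.
have hl' : forall j, 0 <= (\row_j lam j) 0 j <= 1 by move=> j; rewrite mxE.
have core := core_mx hc hp heig hcpc hl'.
set a := crd A.
have key : forall j, ip A (P (Cm (Y j))) = ((c *m pm *m a) j 0)^*.
  move=> j; rewrite -[LHS]ip_conj -sP -sC; congr (_^*).
  by rewrite -mulmxA /a -crd_lin // -crd_lin // mxE.
have nA : ip A A = nrm a by rewrite ip_crd.
set w := c *m pm *m a.
have nw := core a.
rewrite nA.
have -> : \sum_j `|ip (Y j) A * ip A (P (Cm (Y j)))| = \sum_j `|a j 0| * `|w j 0|.
  by apply: eq_bigr => j _; rewrite key normrM norm_conjC /a /crd mxE.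
apply: (@le_trans _ _ (\sum_j (`|a j 0| ^+ 2 + `|w j 0| ^+ 2) / 2)).
  apply: ler_sum => j _; rewrite ler_pdivlMr ?ltr0n //.
  rewrite -subr_ge0.
  have -> : `|a j 0| ^+ 2 + `|w j 0| ^+ 2 - `|a j 0| * `|w j 0| * 2 = (`|a j 0| - `|w j 0|) ^+ 2 by ring.
  by rewrite -realEsqr rpredB ?normr_real.
rewrite -mulr_suml big_split /= -!nrmE ler_pdivrMr ?ltr0n //.
by rewrite mulr_natr mulr2n lerD2l.
Qed.
End Abs.

Section SpanSec.
Variables (C : numClosedFieldType) (V : vectType C) (m : nat).
Variables (ip : V -> V -> C) (Y : 'I_m -> V).
Hypothesis ipL : forall a X W Z, ip Z (a *: X + W) = a * ip Z X + ip Z W.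
Hypothesis ortho : forall i j, ip (Y i) (Y j) = (i == j)%:R.
Hypothesis hdim : dim V = m.

Lemma span_ortho X : X = \sum_j ip (Y j) X *: Y j.
Proof.
have ip0 Z : ip Z 0 = 0.
  by apply: dbl0; have := ipL 1 0 0 Z; rewrite scaler0 add0r mul1r.
have ipD Z : {morph ip Z : x y / x + y}.
  by move=> x y; have := ipL 1 x y Z; rewrite scale1r mul1r.
have ipS Z (c : 'I_m -> C) : ip Z (\sum_j c j *: Y j) = \sum_j c j * ip Z (Y j).
  rewrite (big_morph (ip Z) (ipD Z) (ip0 Z)); apply: eq_bigr => j _.
  by rewrite -[c j *: Y j]addr0 ipL ip0 addr0.
have ipc (c : 'I_m -> C) j : ip (Y j) (\sum_i c i *: Y i) = c j.
  rewrite ipS (bigD1 j) //= ortho eqxx mulr1 big1 ?addr0 //.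
  by move=> k hk; rewrite ortho eq_sym (negbTE hk) mulr0.
set T := [tuple Y i | i < m].
have nT : forall i : 'I_m, T`_i = Y i by move=> i; rewrite -tnth_nth tnth_mktuple.
have fT : free T.
  apply/freeP => k hk i; have := congr1 (ip (Y i)) hk.
  under eq_bigr => j _ do rewrite nT.
  by rewrite ipc ip0.
have sp : <<T>>%VS = fullv.
  by apply/eqP; rewrite eqEdim subvf /= dimvf hdim (eqP fT) size_tuple.
have hX : X \in <<T>>%VS by rewrite sp memvf.
have := coord_span hX; under eq_bigr => j _ do rewrite nT.
move=> eX; rewrite {1}eX; apply: eq_bigr => j _; congr (_ *: _).
by rewrite {2}eX ipc.
Qed.
End SpanSec.

Section Conc.
Variables (R : realType) (n : nat).
Local Notation d := (2 ^ n)%N.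
Variables (U : 'M[R[i]]_d) (ev : 'I_d -> R) (beta s : R).
Hypothesis hU : q_is_unitary U.

Lemma qadjE p q (A : 'M[R[i]]_(p, q)) : q_adjmx A = adj A.
Proof. by []. Qed.

Local Notation ip := (q_s_inner beta U ev s).
Local Notation P1 := (q_gibbs_pow beta U ev (1 - s)).
Local Notation Q1 := (q_gibbs_pow beta U ev s).
Local Notation rho := (q_gibbs beta U ev).

Lemma ipLc a X W Z : ip Z (a *: X + W) = a * ip Z X + ip Z W.
Proof.
by rewrite /q_s_inner mulmxDr mulmxDl -scalemxAr -scalemxAl mxtraceD mxtraceZ.
Qed.

Lemma ipRc a X W Z : ip (a *: X + W) Z = a^* * ip X Z + ip W Z.
Proof.
rewrite /q_s_inner !qadjE adjD adjZ.
by rewrite !mulmxDl -!scalemxAl mxtraceD mxtraceZ.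
Qed.

Lemma weight_ge0 x : 0 <= q_gibbs_weight beta ev x.
Proof.
by rewrite /q_gibbs_weight divr_ge0 ?expR_ge0 // sumr_ge0 // => k _; rewrite expR_ge0.
Qed.

Lemma QP : Q1 *m P1 = rho.
Proof.
rewrite /q_gibbs_pow /q_gibbs /q_specfun !qadjE.
have hU' : adj U *m U = 1%:M by exact: hU.
rewrite -!mulmxA; congr (_ *m _); rewrite !mulmxA -(mulmxA _ (adj U)) hU' mulmx1.
rewrite mulmx_diag; congr (_ *m _); congr diag_mx; apply/matrixP => i j; rewrite !mxE.
rewrite -rmorphM /= -powRD; last by rewrite addrC subrK oner_eq0.
by rewrite addrC subrK powRr1 // weight_ge0.
Qed.

Lemma ip1 X : ip 1%:M X = \tr (X *m rho).
Proof.
by rewrite /q_s_inner qadjE adj1 mul1mx mxtrace_mulC mulmxA QP mxtrace_mulC.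
Qed.

Lemma ip_HS X W : ip X W = \tr (adj (adj P1 *m X *m adj Q1) *m W).
Proof.
rewrite /q_s_inner !adjM !adjK !qadjE mxtrace_mulC !mulmxA //.
Qed.

Lemma kraus_dual (I : finType) (K : I -> 'M[R[i]]_d) X W :
  \tr (adj X *m q_kraus_adj K W) = \tr (adj (q_kraus_map K X) *m W).
Proof.
have adj0 : adj (0 : 'M[R[i]]_d) = 0 by apply/matrixP => i j; rewrite !mxE rmorph0.
rewrite /q_kraus_adj /q_kraus_map mulmx_sumr (big_morph _ (@adjD _ _ _) adj0) mulmx_suml !raddf_sum /=.
apply: eq_bigr => u _; rewrite !qadjE !adjM adjK !mulmxA.
by rewrite mxtrace_mulC !mulmxA.
Qed.

Lemma conj_tr (M : 'M[R[i]]_d) : (\tr M)^* = \tr (adj M).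
Proof. by rewrite /mxtrace rmorph_sum; apply: eq_bigr => i _; rewrite adjE. Qed.

Lemma HS_nondeg (Z : 'M[R[i]]_d) : (forall W, \tr (adj Z *m W) = 0) -> Z = 0.
Proof.
move=> h; apply/matrixP => i j; have := h (delta_mx i j).
rewrite /mxtrace (bigD1 j) //= big1 => [|k hk]; last first.
  by rewrite mxE big1 // => l _; rewrite !mxE (negbTE hk) andbF mulr0.
rewrite addr0 mxE (bigD1 i) //= big1 => [|l hl]; last by rewrite !mxE (negbTE hl) mulr0.
rewrite !mxE !eqxx mulr1 addr0 => /eqP; rewrite conjC_eq0 => /eqP ->.
by [].
Qed.

Lemma rho_herm : adj rho = rho.
Proof.
rewrite /q_gibbs /q_specfun !qadjE !adjM adjK adj_diag mulmxA; congr (_ *m _ *m _).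
congr diag_mx; apply/matrixP => i j; rewrite !mxE.
by rewrite conj_Creal //; apply/complex_realP; eexists.
Qed.



Lemma adj0c p q : adj (0 : 'M[R[i]]_(p, q)) = 0.
Proof. by apply/matrixP => i j; rewrite !mxE rmorph0. Qed.

Lemma ipZlc a X Z : ip (a *: X) Z = a^* * ip X Z.
Proof.
by have := ipRc a X 0 Z; rewrite addr0 (ip0l ipRc) addr0.
Qed.

Lemma eig_transfer (I : finType) (K : I -> 'M[R[i]]_d) :
  q_s_detailed_balance ip (q_kraus_adj K) ->
  (forall (mu : R[i]) (X : 'M[R[i]]_d), X != 0 -> q_kraus_map K X = mu *: X -> 0 <= mu <= 1) ->
  (forall Z, (forall W, ip Z W = 0) -> Z = 0) ->
  forall mu Z, Z != 0 -> q_kraus_adj K Z = mu *: Z -> 0 <= mu <= 1.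
Proof.
move=> sK hsp hnd mu Z hZ hPZ.
set G := adj P1 *m Z *m adj Q1.
apply: (hsp mu G).
  apply: contraNneq hZ => hG; apply/eqP; apply: hnd => W.
  by rewrite ip_HS -/G hG adj0c mul0mx mxtrace0.
apply/eqP; rewrite -subr_eq0; apply/eqP; apply: HS_nondeg => W.
rewrite adjD adjN adjZ mulmxDl mulNmx -scalemxAl mxtraceD raddfN /= mxtraceZ.
rewrite -kraus_dual -ip_HS sK hPZ ipZlc ip_HS.
by rewrite subrr.
Qed.

Lemma lin_kraus_adj (I : finType) (K : I -> 'M[R[i]]_d) : lin (q_kraus_adj K).
Proof.
move=> a X W; rewrite /q_kraus_adj scaler_sumr -big_split /=; apply: eq_bigr => u _.
by rewrite mulmxDr mulmxDl -scalemxAr -scalemxAl.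
Qed.

Lemma mean_real (J : finType) (O : J -> 'M[R[i]]_d) (out : J -> R) :
  (q_meas_mean O out rho)^* = q_meas_mean O out rho.
Proof.
rewrite /q_meas_mean rmorph_sum; apply: eq_bigr => u _.
rewrite rmorphM /= conj_tr !qadjE adjM adjK adjM rho_herm mulmxA; congr (_ * _).
by rewrite conj_Creal //; apply/complex_realP; eexists.
Qed.

Lemma cov_eq (J : finType) (O : J -> 'M[R[i]]_d) (out : J -> R) :
  q_meas_cov O out rho =
  \tr (q_meas_hat_adj O out rho (q_meas_hat_adj O out rho 1%:M) *m rho).
Proof.
set m := q_meas_mean O out rho.
have cc x : ((out x)%:C%C - m)^* = (out x)%:C%C - m.
  rewrite rmorphB /= mean_real; congr (_ - _).
  by rewrite conj_Creal //; apply/complex_realP; eexists.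
have tr_sum (F : J -> 'M[R[i]]_d) : \tr (\sum_i F i) = \sum_i \tr (F i).
  by rewrite (big_morph _ (@mxtraceD _ _) (mxtrace0 _ _)).
rewrite /q_meas_cov /q_meas_hat_adj -/m mulmx_suml tr_sum; apply: eq_bigr => x _.
rewrite cc -scalemxAl mxtraceZ mulmx_sumr mulmx_suml mulmx_suml tr_sum mulr_sumr.
apply: eq_bigr => y _; rewrite cc -scalemxAr -scalemxAl -scalemxAl mxtraceZ mulrA.
congr (_ * _); rewrite !qadjE mulmx1.
rewrite -[O y *m O x *m rho *m adj (O x) *m adj (O y)]mulmxA mxtrace_mulC !mulmxA.
by rewrite mxtrace_mulC !mulmxA.
Qed.

End Conc.
Unset Implicit Arguments.

Theorem lemma5p4
  (R : realType) (n : nat)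
  (H : 'M[R[i]]_(2 ^ n)) (U : 'M[R[i]]_(2 ^ n)) (ev : 'I_(2 ^ n) -> R)
  (hU : q_is_unitary U) (hH : H = q_specfun U ev id)
  (beta : R) (hbeta : 0 < beta) (s : R)
  (I : finType) (K : I -> 'M[R[i]]_(2 ^ n)) (hN : q_is_channel K)
  (J : finType) (O : J -> 'M[R[i]]_(2 ^ n)) (out : J -> R)
  (hout : injective out) (hM : q_is_channel O)
  (Y : 'I_(2 ^ n * 2 ^ n) -> 'M[R[i]]_(2 ^ n)) (lam : 'I_(2 ^ n * 2 ^ n) -> R) :
  let rho := q_gibbs beta U ev in
  let ip := q_s_inner beta U ev s in
  let Eadj := fun X => q_kraus_adj O (q_kraus_adj K (q_kraus_adj O X)) in
  let Ehatadj := fun X => q_meas_hat_adj O out rho (q_kraus_adj K (q_kraus_adj O X)) in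
  let alpha := fun i j => ip (Y j) (Ehatadj (Y i)) in
  q_s_detailed_balance ip (q_kraus_adj K) ->
  q_s_detailed_balance ip (q_kraus_adj O) ->
  q_kraus_map K rho = rho ->
  (forall sigma, q_is_state sigma -> q_kraus_map K sigma = sigma -> sigma = rho) ->
  (forall (mu : R[i]) (X : 'M[R[i]]_(2 ^ n)),
      X != 0 -> q_kraus_map K X = mu *: X -> (0 <= mu <= 1)) ->
  (forall i j, ip (Y i) (Y j) = (i == j)%:R) ->
  (forall i, Eadj (Y i) = ((lam i)%:C)%C *: Y i) ->
  Y (idx1 n) = 1%:M ->
  lam (idx1 n) = 1 ->
  (forall i, i != idx1 n -> lam i < 1) ->
  (forall i j : 'I_(2 ^ n * 2 ^ n), (i <= j)%N -> lam j <= lam i) ->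
  (forall i, 0 <= lam i) ->
  q_s_detailed_balance ip (q_meas_hat_adj O out rho) ->
  \sum_(j < 2 ^ n * 2 ^ n) `|alpha (idx1 n) j * alpha j (idx1 n)|
    <= q_meas_cov O out rho.
Proof.
move=> rho ip Eadj Ehatadj alpha; rewrite /alpha /Ehatadj /Eadj /ip /rho => sK sO hfix huniq hspec hortho heig hY1 hlam1 hlt hmono hlam0 sD.
have ipL := ipLc U ev beta s.
have ipR := ipRc U ev beta s.
have span := span_ortho ipL hortho (dim_matrix _ _ _).
have hnd : forall Z, (forall W, q_s_inner beta U ev s Z W = 0) -> Z = 0.
  move=> Z hZ; rewrite (span Z); apply: big1 => j _.
  by rewrite -(ip_conj ipR span) hZ rmorph0 scale0r.
have eigP := eig_transfer sK hspec hnd.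
have hl : forall j, 0 <= ((lam j)%:C)%C <= 1.
  move=> j; rewrite !lecR hlam0 /= -hlam1; apply: hmono; exact: leq0n.
have hA := abs_main ipL ipR hortho span (q_meas_hat_adj O out rho 1%:M)
  (lin_kraus_adj K) (lin_kraus_adj O) sK sO eigP heig hl.
have P1 : q_kraus_adj K 1%:M = 1%:M.
  by rewrite -[RHS]hN /q_kraus_adj; apply: eq_bigr => u _; rewrite mulmx1.
have C1 : q_kraus_adj O 1%:M = 1%:M.
  by rewrite -[RHS]hM /q_kraus_adj; apply: eq_bigr => u _; rewrite mulmx1.
rewrite cov_eq -(ip1 ev beta s hU) sD.
apply: le_trans hA; rewrite le_eqVlt; apply/orP; left; apply/eqP.
apply: eq_bigr => j _; rewrite hY1 C1 P1 -sD.
by [].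
Qed.
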